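(* For every integer $m\geq 0$, $$\frac{H_{m+1}-1}{\log 2}\leq e_m<\frac{H_{m+1}}{\log 2}-0.161<\frac{H_{m+1}}{\log 2}.$$
   Context: $H_n=\sum_{j=1}^{n}\frac1j$ denotes the $n$-th harmonic number. The sequence $(e_m)_{m\geq0}$ of rational numbers is defined by $e_0=0$ and, for $m\geq1$, $$e_m=\frac{2^{m+1}+\sum_{j=1}^{m}\binom{m+1}{j}e_{m-j}}{2^{m+1}-2}.$$ *)

(* Defs.v *)
From Stdlib Require Import Reals Lra List.
Open Scope R_scope.

Fixpoint harmonic (n : nat) : R :=
  match n with
  | O => 0
  | S k => harmonic k + / INR (S k)
  end.

(* Given l = [e_{m-1}; ...; e_0] (so nth (j-1) l 0 = e_{m-j}), compute e_m
   for m >= 1 by the defining recurrence. *)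
Definition e_next (m : nat) (l : list R) : R :=
  (2 ^ (S m) + sum_f 1 m (fun j => C (S m) j * nth (j - 1) l 0))
  / (2 ^ (S m) - 2).

Fixpoint e_list (m : nat) : list R :=
  match m with
  | O => 0 :: nil
  | S k => let l := e_list k in e_next (S k) l :: l
  end.

Definition e (m : nat) : R := nth 0 (e_list m) 0.

Lemma e_0 : e 0 = 0. Proof. reflexivity. Qed.
Lemma e_1 : e 1 = 2.
Proof. unfold e, e_list, e_next, sum_f, C; simpl. field. Qed.

(* Main.v *)
Require Import Defs.
From Stdlib Require Import Reals Lra Lia List Arith Wf_nat.
Open Scope R_scope.

Fixpoint Cb (n k : nat) : R :=
  match n, k with
  | O, O => 1
  | O, S _ => 0
  | S n', O => 1
  | S n', S k' => Cb n' k' + Cb n' (S k')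
  end.

Lemma Cb_0 n : Cb n 0 = 1. Proof. destruct n; reflexivity. Qed.

Lemma Cb_big n k : (n < k)%nat -> Cb n k = 0.
Proof.
  revert k; induction n; intros k H; destruct k; try lia; simpl; auto.
  rewrite !IHn by lia; ring.
Qed.

Lemma C_n0 n : C n 0 = 1.
Proof. unfold C; rewrite Nat.sub_0_r; simpl; field; apply INR_fact_neq_0. Qed.

Lemma C_nn n : C n n = 1.
Proof. unfold C; rewrite Nat.sub_diag; simpl; field; apply INR_fact_neq_0. Qed.

Lemma Cb_C n k : (k <= n)%nat -> Cb n k = C n k.
Proof.
  revert k; induction n; intros k H.
  - destruct k; try lia. rewrite C_n0; reflexivity.
  - destruct k. rewrite C_n0; reflexivity.
    simpl. destruct (Nat.eq_dec k n) as [->|Hk].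
    + rewrite (Cb_big n (S n)) by lia. rewrite IHn by lia. rewrite !C_nn; ring.
    + rewrite !IHn by lia. apply pascal; lia.
Qed.

Lemma Cb_nonneg n k : 0 <= Cb n k.
Proof.
  revert k; induction n; intros k; destruct k; simpl; try lra.
  specialize (IHn k) as H1; specialize (IHn (S k)) as H2; lra.
Qed.

Lemma Cb_nn n : Cb n n = 1.
Proof. rewrite Cb_C by lia; apply C_nn. Qed.

Lemma Cb_sym n k : (k <= n)%nat -> Cb n (n - k) = Cb n k.
Proof. intros H; rewrite !Cb_C by lia; symmetry; apply pascal_step1; lia. Qed.

Definition B (n : nat) (phi : nat -> R) : R := sum_f_R0 (fun k => Cb n k * phi k) n.

Lemma B_pascal n phi : B (S n) phi = B n phi + B n (fun k => phi (S k)).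
Proof.
  unfold B. rewrite decomp_sum by lia. simpl pred.
  rewrite Cb_0.
  rewrite (sum_eq _ (fun i => Cb n i * phi (S i) + Cb n (S i) * phi (S i)))
    by (intros; simpl; ring).
  rewrite plus_sum.
  assert (E : sum_f_R0 (fun k => Cb n k * phi k) (S n) =
              Cb n 0 * phi 0%nat + sum_f_R0 (fun i => Cb n (S i) * phi (S i)) n).
  { rewrite decomp_sum by lia. reflexivity. }
  simpl in E. rewrite Cb_big in E by lia. rewrite Cb_0 in E. lra.
Qed.

Lemma sum_rev F n : sum_f_R0 (fun i => F (n - i)%nat) n = sum_f_R0 F n.
Proof.
  induction n.
  - reflexivity.
  - rewrite decomp_sum by lia. simpl pred.
    simpl (S n - 0)%nat.
    change (sum_f_R0 (fun i => F (S n - S i)%nat) n) with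
      (sum_f_R0 (fun i => F (n - i)%nat) n).
    rewrite IHn. simpl. ring.
Qed.

Lemma B_ext n phi chi : (forall k, (k <= n)%nat -> phi k = chi k) -> B n phi = B n chi.
Proof. intros H; unfold B; apply sum_eq; intros; rewrite H; auto. Qed.

Lemma B_lin n : forall phi chi a b,
  B n (fun k => a * phi k + b * chi k) = a * B n phi + b * B n chi.
Proof.
  induction n; intros.
  - unfold B; simpl; ring.
  - rewrite !B_pascal. rewrite IHn. rewrite (IHn (fun k => phi (S k)) (fun k => chi (S k))).
    ring.
Qed.

Lemma B_const n : B n (fun _ => 1) = 2 ^ n.
Proof. induction n. unfold B; simpl; ring. rewrite B_pascal, IHn; simpl; ring. Qed.

Lemma B_zero n : B n (fun _ => 0) = 0.
Proof. induction n. unfold B; simpl; ring. rewrite B_pascal, IHn; ring. Qed.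

Lemma B_ind0 n : B n (fun k => if Nat.eqb k 0 then 1 else 0) = 1.
Proof. induction n. unfold B; simpl; ring. rewrite B_pascal, IHn. simpl. rewrite B_zero; ring. Qed.

Lemma B_ind1 n : B n (fun k => if Nat.eqb k 1 then 1 else 0) = INR n.
Proof.
  induction n. unfold B; simpl; ring. rewrite B_pascal, IHn.
  rewrite (B_ext n _ (fun k => if Nat.eqb k 0 then 1 else 0)) by (intros; reflexivity).
  rewrite B_ind0. rewrite (S_INR n); ring.
Qed.

Lemma absorb n k : (k <= n)%nat -> Cb n k * / INR (S k) = Cb (S n) (S k) / INR (S n).
Proof.
  intros H. rewrite !Cb_C by lia.
  rewrite pascal_step3 by lia. rewrite pascal_step2 by lia.
  assert (INR (S n - k) <> 0) by (apply not_0_INR; lia).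
  assert (INR (S k) <> 0) by (apply not_0_INR; lia).
  assert (INR (S n) <> 0) by (apply not_0_INR; lia).
  field; auto.
Qed.

Lemma B_inv n : B n (fun k => / INR (S k)) = (2 ^ (S n) - 1) / INR (S n).
Proof.
  unfold B. rewrite (sum_eq _ (fun k => Cb (S n) (S k) * 1 * / INR (S n)))
    by (intros; rewrite absorb by lia; unfold Rdiv; ring).
  rewrite <- (B_const (S n)). unfold B. rewrite (decomp_sum (fun k => Cb (S n) k * 1)) by lia. simpl pred.
  rewrite Cb_0. rewrite <- scal_sum.
  unfold Rdiv. ring.
Qed.

Fixpoint Tx (n : nat) (x : R) : R :=
  match n with
  | O => 0
  | S k => Tx k x + x ^ (S k) / INR (S k)
  end.

Definition Tn n := Tx n (/ 2).

Lemma B_H n : B n harmonic = 2 ^ n * (harmonic n - Tn n).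
Proof.
  induction n.
  - unfold B, Tn; simpl; ring.
  - rewrite B_pascal.
    rewrite (B_ext n (fun k => harmonic (S k)) (fun k => 1 * harmonic k + 1 * / INR (S k)))
      by (intros k _; change (harmonic (S k)) with (harmonic k + / INR (S k)); ring).
    rewrite B_lin, B_inv, IHn. unfold Tn. simpl harmonic. simpl Tx.
    rewrite pow_inv.
    assert (INR (S n) <> 0) by (apply not_0_INR; lia).
    assert (2 ^ n <> 0) by (apply pow_nonzero; lra).
    simpl. field; auto.
Qed.

Definition Fl (n : nat) (x : R) : R := - ln (1 - x) - Tx n x.

Lemma Fl_deriv n x : x < 1 -> derivable_pt_lim (Fl n) x (x ^ n / (1 - x)).
Proof.
  intros Hx. induction n.
  - apply (derivable_pt_lim_ext (fun z => - ln (1 - z))).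
    { intros; unfold Fl; simpl Tx; ring. }
    replace (x ^ 0 / (1 - x)) with (- (/ (1 - x) * (0 - 1))) by (rewrite pow_O; field; lra).
    apply derivable_pt_lim_opp.
    apply (derivable_pt_lim_comp (fun z => 1 - z) ln).
    + apply derivable_pt_lim_minus. apply derivable_pt_lim_const. apply derivable_pt_lim_id.
    + apply derivable_pt_lim_ln. lra.
  - apply (derivable_pt_lim_ext (fun z => Fl n z - / INR (S n) * z ^ (S n))).
    { intros z; unfold Fl; cbn [Tx]. unfold Rdiv. ring. }
    replace (x ^ S n / (1 - x)) with (x ^ n / (1 - x) - / INR (S n) * (INR (S n) * x ^ (pred (S n)))).
    2:{ simpl pred. assert (INR (S n) <> 0) by (apply not_0_INR; lia). change (x ^ S n) with (x * x ^ n). field. repeat split; auto; lra. }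
    apply (derivable_pt_lim_minus (Fl n) (fun z => / INR (S n) * z ^ S n)); auto.
    apply derivable_pt_lim_scal. apply derivable_pt_lim_pow.
Qed.

Lemma Tx_0 n : Tx n 0 = 0.
Proof. induction n; simpl; auto. rewrite IHn. simpl. unfold Rdiv. ring. Qed.

Definition Gl (n : nat) (x : R) : R := Fl n x - 2 * / INR (S n) * x ^ (S n).

Lemma Gl_deriv n x : x < 1 -> derivable_pt_lim (Gl n) x (x ^ n / (1 - x) - 2 * x ^ n).
Proof.
  intros Hx.
  replace (x ^ n / (1 - x) - 2 * x ^ n) with
    (x ^ n / (1 - x) - 2 * / INR (S n) * (INR (S n) * x ^ (pred (S n)))).
  2:{ simpl pred. assert (INR (S n) <> 0) by (apply not_0_INR; lia). field. repeat split; auto; lra. }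
  apply (derivable_pt_lim_minus (Fl n) (fun z => 2 * / INR (S n) * z ^ S n)).
  apply Fl_deriv; auto.
  apply derivable_pt_lim_scal. apply derivable_pt_lim_pow.
Qed.

Lemma tail_bounds n : 0 <= ln 2 - Tn n <= / (INR (S n) * 2 ^ n).
Proof.
  assert (E : ln 2 - Tn n = Fl n (/ 2)).
  { unfold Fl, Tn. replace (1 - /2) with (/2) by field. rewrite ln_Rinv by lra. ring. }
  assert (F0 : Fl n 0 = 0).
  { unfold Fl. rewrite Tx_0. replace (1 - 0) with 1 by ring. rewrite ln_1. ring. }
  assert (G0 : Gl n 0 = 0).
  { unfold Gl. rewrite F0. rewrite pow_i by lia. ring. }
  destruct (MVT_cor3 (Fl n) (fun x => x ^ n / (1 - x)) 0 (/2)) as [c [Hc1 [Hc2 Hc]]].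
  { lra. }
  { intros; apply Fl_deriv; lra. }
  destruct (MVT_cor3 (Gl n) (fun x => x ^ n / (1 - x) - 2 * x ^ n) 0 (/2)) as [d [Hd1 [Hd2 Hd]]].
  { lra. }
  { intros; apply Gl_deriv; lra. }
  assert (Hcn : 0 <= c ^ n) by (apply pow_le; lra).
  assert (Hdn : 0 <= d ^ n) by (apply pow_le; lra).
  rewrite E. split.
  - rewrite Hc, F0.
    assert (0 <= c ^ n / (1 - c)) by (apply Rmult_le_pos; auto; left; apply Rinv_0_lt_compat; lra).
    nra.
  - assert (H1 : d ^ n / (1 - d) <= 2 * d ^ n).
    { apply (Rmult_le_reg_r (1 - d)). lra. unfold Rdiv. rewrite Rmult_assoc, Rinv_l by lra. nra. }
    assert (Gl n (/2) <= 0) by (rewrite Hd, G0; nra).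
    unfold Gl in H. 
    assert (0 < 2 ^ n) by (apply pow_lt; lra).
    assert (0 < INR (S n)) by (apply lt_0_INR; lia).
    replace (/ (INR (S n) * 2 ^ n)) with (2 * / INR (S n) * (/ 2) ^ S n).
    lra. rewrite pow_inv. change (2 ^ S n) with (2 * 2 ^ n). field. split; lra.
Qed.

Lemma ln2_bounds : 1/2 <= ln 2 <= 6934/10000.
Proof.
  destruct (tail_bounds 1) as [H1 _].
  destruct (tail_bounds 6) as [_ H6].
  unfold Tn in *. simpl Tx in *. simpl INR in *. split; lra.
Qed.

Lemma e_list_nth k i : (i <= k)%nat -> nth i (e_list k) 0 = e (k - i).
Proof.
  revert i; induction k; intros i H.
  - destruct i; try lia. reflexivity.
  - destruct i. reflexivity.
    cbn [e_list nth]. rewrite IHk by lia. reflexivity.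
Qed.

Lemma pow2_ge1 k : 1 <= 2 ^ k.
Proof. induction k; simpl; lra. Qed.

Lemma e_rec k : e (S k) * (2 ^ S (S k) - 2) =
  2 ^ S (S k) + sum_f_R0 (fun x => C (S (S k)) (S x) * e (k - x)) k.
Proof.
  assert (HP : 2 ^ S (S k) - 2 > 0).
  { pose proof (pow2_ge1 k). change (2 ^ S (S k)) with (2 * (2 * 2 ^ k)). lra. }
  unfold e at 1. cbn [e_list nth]. unfold e_next, sum_f.
  replace (S k - 1)%nat with k by lia.
  rewrite (sum_eq _ (fun x => C (S (S k)) (S x) * e (k - x))).
  - field. lra.
  - intros x Hx. replace (x + 1)%nat with (S x) by lia.
    replace (S x - 1)%nat with x by lia. rewrite e_list_nth by lia. reflexivity.
Qed.

Lemma sum_shape k psi :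
  sum_f_R0 (fun x => Cb (S (S k)) (S x) * psi (S k - x)%nat) k =
  B (S (S k)) psi - psi (S (S k)) - psi 0%nat.
Proof.
  unfold B. rewrite <- (sum_rev (fun j => Cb (S (S k)) j * psi j)).
  rewrite (sum_eq (fun i => Cb (S (S k)) (S (S k) - i) * psi (S (S k) - i)%nat)
                  (fun i => Cb (S (S k)) i * psi (S (S k) - i)%nat))
    by (intros; rewrite Cb_sym by lia; reflexivity).
  rewrite (decomp_sum _ (S (S k))) by lia. simpl pred. cbn [sum_f_R0].
  rewrite Cb_0, Nat.sub_0_r, Nat.sub_diag, Cb_nn.
  change (sum_f_R0 (fun i => Cb (S (S k)) (S i) * psi (S (S k) - S i)%nat) k)
    with (sum_f_R0 (fun x => Cb (S (S k)) (S x) * psi (S k - x)%nat) k).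
  ring.
Qed.

Lemma ln2_pos : 0 < ln 2.
Proof. pose proof ln2_bounds; lra. Qed.

Lemma harmonic_nonneg n : 0 <= harmonic n.
Proof.
  induction n; cbn [harmonic]. lra.
  pose proof (Rinv_0_lt_compat (INR (S n)) (lt_0_INR _ (Nat.lt_0_succ n))). lra.
Qed.

Lemma lower m : (harmonic (S m) - 1) * / ln 2 <= e m.
Proof.
  induction m as [m IH] using lt_wf_ind.
  destruct m as [|k].
  - rewrite e_0. cbn [harmonic]. replace (0 + / INR 1 - 1) with 0 by (simpl; field). rewrite Rmult_0_l; lra.
  - set (a := / ln 2).
    assert (Ha : 0 < a) by (apply Rinv_0_lt_compat, ln2_pos).
    assert (Hal : a * ln 2 = 1) by (unfold a; field; pose proof ln2_pos; lra).
    assert (HP : 2 ^ S (S k) - 2 > 0).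
    { pose proof (pow2_ge1 k). change (2 ^ S (S k)) with (2 * (2 * 2 ^ k)). lra. }
    apply (Rmult_le_reg_r (2 ^ S (S k) - 2)); auto.
    rewrite e_rec.
    set (psi := fun j => a * harmonic j + (- a) * 1).
    assert (Hs : sum_f_R0 (fun x => Cb (S (S k)) (S x) * psi (S k - x)%nat) k <=
                 sum_f_R0 (fun x => C (S (S k)) (S x) * e (k - x)) k).
    { apply sum_Rle. intros x Hx.
      rewrite <- Cb_C by lia. apply Rmult_le_compat_l. apply Cb_nonneg.
      replace (S k - x)%nat with (S (k - x)) by lia.
      unfold psi. pose proof (IH (k - x)%nat ltac:(lia)). fold a in H. lra. }
    rewrite sum_shape in Hs. unfold B at 1 in Hs. fold (B (S (S k)) psi) in Hs.
    unfold psi at 1 in Hs. rewrite B_lin, B_H, B_const in Hs.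
    unfold psi in Hs. change (harmonic 0) with 0 in Hs.
    destruct (tail_bounds (S (S k))) as [T1 _].
    assert (HaT : a * Tn (S (S k)) <= 1).
    { rewrite <- Hal. apply Rmult_le_compat_l; lra. }
    pose proof (harmonic_nonneg (S (S k))).
    set (P := 2 ^ S (S k)) in *. set (Hn := harmonic (S (S k))) in *.
    set (T := Tn (S (S k))) in *.
    assert (0 < P) by (unfold P; apply pow_lt; lra).
    assert (P * (1 - a * T) >= 0) by nra.
    assert (a * Hn >= 0) by nra.
    nra.
Qed.

Lemma harmonic_le n : harmonic (S n) <= (INR (S n) + 1) / 2.
Proof.
  induction n.
  - cbn [harmonic]. simpl INR. lra.
  - change (harmonic (S (S n))) with (harmonic (S n) + / INR (S (S n))).
    assert (INR (S (S n)) >= 2) by (apply Rle_ge; replace 2 with (INR 2) by (simpl; ring); apply le_INR; lia).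
    assert (/ INR (S (S n)) <= / 2) by (apply Rinv_le_contravar; lra).
    pose proof (S_INR (S n)). lra.
Qed.

Lemma upper m : (1 <= m)%nat -> e m <= / ln 2 * harmonic (S m) - 162 / 1000.
Proof.
  induction m as [m IH] using lt_wf_ind. intros Hm.
  set (a := / ln 2).
  assert (Ha : 0 < a) by (apply Rinv_0_lt_compat, ln2_pos).
  assert (Hal : a * ln 2 = 1) by (unfold a; field; pose proof ln2_pos; lra).
  pose proof ln2_bounds as Hl2.
  destruct m as [|k]; [lia|].
  destruct (Nat.eq_dec k 0) as [->|Hk].
  - rewrite e_1. cbn [harmonic]. simpl INR.
    assert (2162 / 1000 * ln 2 <= 3 / 2) by lra.
    assert (2162 / 1000 <= 3 / 2 * a) by nra.
    lra.
  - set (c := - (162 / 1000)).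
    assert (HP : 2 ^ S (S k) - 2 > 0).
    { pose proof (pow2_ge1 k). change (2 ^ S (S k)) with (2 * (2 * 2 ^ k)). lra. }
    apply (Rmult_le_reg_r (2 ^ S (S k) - 2)); auto.
    rewrite e_rec.
    set (psi := fun j => 1 * (a * harmonic j + c * 1) + (- (a + c)) * (if Nat.eqb j 1 then 1 else 0)).
    assert (Hs : sum_f_R0 (fun x => C (S (S k)) (S x) * e (k - x)) k <=
                 sum_f_R0 (fun x => Cb (S (S k)) (S x) * psi (S k - x)%nat) k).
    { apply sum_Rle. intros x Hx.
      rewrite <- Cb_C by lia. apply Rmult_le_compat_l. apply Cb_nonneg.
      replace (S k - x)%nat with (S (k - x)) by lia.
      unfold psi. destruct (k - x)%nat as [|j] eqn:Ej.
      - rewrite e_0. cbn [harmonic Nat.eqb]. simpl INR. lra.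
      - pose proof (IH (S j) ltac:(lia) ltac:(lia)). fold a in H. cbn [Nat.eqb]. unfold c. lra. }
    rewrite sum_shape in Hs. unfold B at 1 in Hs. fold (B (S (S k)) psi) in Hs.
    unfold psi at 1 in Hs. rewrite !B_lin, B_H, B_const, B_ind1 in Hs.
    unfold psi in Hs. change (harmonic 0) with 0 in Hs. cbn [Nat.eqb] in Hs.
    destruct (tail_bounds (S (S k))) as [_ T2].
    pose proof (harmonic_le (S k)) as HH.
    assert (HN : INR (S (S k)) >= 3) by (apply Rle_ge; replace 3 with (INR 3) by (simpl; ring); apply le_INR; lia).
    set (P := 2 ^ S (S k)) in *. set (Hn := harmonic (S (S k))) in *.
    set (T := Tn (S (S k))) in *. set (N := INR (S (S k))) in *.
    assert (0 < P) by (unfold P; apply pow_lt; lra).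
    assert (HT : P * (ln 2 - T) <= / (N + 1)).
    { rewrite S_INR in T2. fold N in T2.
      apply (Rmult_le_reg_r (/ P)). apply Rinv_0_lt_compat; lra.
      replace (P * (ln 2 - T) * / P) with (ln 2 - T) by (field; lra).
      replace (/ (N + 1) * / P) with (/ ((N + 1) * P)) by (field; split; lra). exact T2. }
    assert (HI : / (N + 1) <= / 4) by (apply Rinv_le_contravar; lra).
    assert (HQ : / (N + 1) + Hn <= (1 + c * ln 2) * N) by (unfold c; nra).
    assert (HQa : a * / (N + 1) + a * Hn <= a * N + c * N).
    { assert (E1 : a * ((1 + c * ln 2) * N) = a * N + c * N * (a * ln 2)) by ring.
      rewrite Hal, Rmult_1_r in E1. rewrite <- E1.
      rewrite <- Rmult_plus_distr_l. apply Rmult_le_compat_l; lra. }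
    assert (HTa : P - a * P * T <= a * / (N + 1)).
    { assert (E1 : a * (P * (ln 2 - T)) = P * (a * ln 2) - a * P * T) by ring.
      rewrite Hal, Rmult_1_r in E1. rewrite <- E1. apply Rmult_le_compat_l; lra. }
    unfold c in *. lra.
Qed.

Theorem proposition1 (m : nat) :
  (harmonic (S m) - 1) / ln 2 <= e m /\
  e m < harmonic (S m) / ln 2 - 161 / 1000 /\
  harmonic (S m) / ln 2 - 161 / 1000 < harmonic (S m) / ln 2.
Proof.
  pose proof ln2_bounds as Hl2.
  assert (Ha : 1 < / ln 2).
  { replace 1 with (/ 1) by field. apply Rinv_lt_contravar; lra. }
  split; [|split].
  - unfold Rdiv. apply lower.
  - unfold Rdiv. destruct m as [|k].
    + rewrite e_0. cbn [harmonic]. simpl INR. rewrite Rinv_1. lra.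
    + pose proof (upper (S k) ltac:(lia)). rewrite Rmult_comm. lra.
  - lra.
Qed.
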